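(* Consider a Robust Logical-Dynamical Chain consisting of $N \ge 1$ operators $o_1,\dots,o_N$ with goal condition $L_G$, executed as described in the context. Suppose that there is a constant $p>0$ such that every operator $o_i$ induces a controlled transition with probability $p_i \ge p$, regardless of the history of the execution. Then, with probability $1$, the execution eventually reaches a state satisfying $L_G$. Moreover, this convergence is exponential in the number $k$ of uncontrolled transitions: the probability that $L_G$ is reached after at most $k$ uncontrolled transitions is at least $1-(1-p^N)^{k+1}$. Finally, the expected total number $T$ of transitions (controlled and uncontrolled) made before $L_G$ is reached satisfies $E[T] \le N/p^N$.
   Context: Let $\mathcal{S}$ be the joint continuous–logical state space (a continuous world state $x$ together with the vector of truth values of all grounded logical predicates evaluated at $x$). A logical condition $L$ is a Boolean function on $\mathcal{S}$, identified with the set of states where it is true; $L_1 \Rightarrow L_2$ means $L_1 \subseteq L_2$. An operator is a tuple $o=(L_P,L_R,L_E,\pi)$, where $L_P$ is the entry condition (the operator may be entered when $L_P$ holds), $L_R$ is the run condition (an already-entered operator may keep running while $L_R$ holds), $L_E$ is the expected effect, and $\pi:\mathcal{S}\to\mathcal{U}$ is a control policy. The system evolves under Markov dynamics $s_{t+1}=f(s_t,\pi(s_t))$, possibly stochastic and subject to perturbations. A Robust Logical-Dynamical Chain (RLDC) is a sequence of operators $o_1,\dots,o_N$ such that $L_E^i \Rightarrow L_P^{i+1} \Rightarrow L_R^{i+1}$ for each $i$. Its goal condition $L_G$ is the effect reached by completing the last operator, $L_G = L_E^N$. Execution rule: at every time step, the system enters the most downstream (largest-index) operator whose entry condition holds.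 If the state stops satisfying the run condition of the current operator, it switches to the most downstream operator that can be entered. Otherwise it keeps running the current operator's policy. While operator $o_i$ is running, its policy produces a sequence of states. This run either ends in a state satisfying $L_E^i$ with $L_R^i$ held throughout, which is called a controlled transition: the system then advances to $o_{i+1}$, or reaches $L_G$ if $i=N$. Otherwise the run ends in a state violating $L_R^i$, which is called an uncontrolled transition: the system then jumps to some operator (possibly an earlier one, in the worst case $o_1$) or possibly to the goal. ''Operator $o_i$ induces a controlled transition with probability $p_i$'' means that each run of $o_i$ ends in a controlled transition with probability $p_i$. A transition means one such termination of an operator run, controlled or uncontrolled. *)

(* Defs.v *)
From HB Require Import structures.
From mathcomp Require Import all_boot all_order all_algebra.
From mathcomp Require Import all_classical all_reals all_analysis.
Set Implicit Arguments. Unset Strict Implicit. Unset Printing Implicit Defensive.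
Import Order.TTheory GRing.Theory Num.Theory.
Local Open Scope classical_set_scope.
Local Open Scope ring_scope.

(* Operators o_1..o_N are indexed by 'I_N (o_{i+1} is index i).
   A "mode" is [Some i] (operator o_{i+1} is running) or [None]
   (the goal condition L_G has been reached). *)

Definition next_op (N : nat) (i : 'I_N) : option 'I_N := insub i.+1.

(* Event: the discrete execution history up to transition n is (x, c):
   modes X_0..X_n equal x_0..x_n and the kinds (controlled = true)
   of transitions 0..n-1 equal c_0..c_{n-1}. *)
Definition history_event (T : Type) (N : nat)
    (X : nat -> T -> option 'I_N) (C : nat -> T -> bool)
    (n : nat) (x : nat -> option 'I_N) (c : nat -> bool) : set T :=
  [set w | forall m, (m <= n)%N -> X m w = x m /\ ((m < n)%N -> C m w = c m)].

Definition unc_count (T : Type) (C : nat -> T -> bool) (n : nat) (w : T) : nat :=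
  count (fun m => ~~ C m w) (iota 0 n).

(* Number of transitions made before L_G is reached (+oo if never). *)
Definition hitting_time (R : realType) (T : Type) (N : nat)
    (X : nat -> T -> option 'I_N) (w : T) : \bar R :=
  ereal_inf [set (n%:R)%:E | n in [set n : nat | X n w = None]].

(* Main.v *)
Require Import Defs.
From HB Require Import structures.
From mathcomp Require Import all_boot all_order all_algebra.
From mathcomp Require Import all_classical all_reals all_analysis.
From mathcomp Require Import ring lra.
Import Order.TTheory GRing.Theory Num.Theory.
Local Open Scope classical_set_scope.
Local Open Scope ring_scope.

Section Proof.
Variables (d : measure_display) (Omega : measurableType d)
  (R : realType) (P : probability Omega R) (N : nat) (p : R)
  (X : nat -> Omega -> option 'I_N) (C : nat -> Omega -> bool).
Hypothesis p0 : 0 < p.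
Hypothesis p1 : p <= 1.
Hypothesis mX : forall n o, measurable (X n @^-1` [set o]).
Hypothesis mC : forall n, measurable [set w | C n w].
Hypothesis absorb : forall n w, X n w = None -> X n.+1 w = None.
Hypothesis ctrl : forall n w i, X n w = Some i -> C n w -> X n.+1 w = next_op i.
Hypothesis hyp : forall n x c i, x n = Some i ->
     (p%:E * P (history_event X C n x c)
        <= P (history_event X C n x c `&` [set w | C n w]))%E.

Definition Pr (A : set Omega) : R := fine (P A).

Lemma PrE A : measurable A -> P A = (Pr A)%:E.
Proof. by move=> mA; rewrite /Pr fineK // fin_num_measure. Qed.

Lemma Pr_ge0 A : 0 <= Pr A.
Proof. by rewrite /Pr fine_ge0. Qed.

Lemma Pr_le A B : measurable A -> measurable B -> A `<=` B -> Pr A <= Pr B.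
Proof.
move=> mA mB AB; rewrite -lee_fin -PrE // -PrE //.
by apply: le_measure => //; rewrite inE.
Qed.

Lemma PrT : Pr setT = 1.
Proof. by rewrite /Pr probability_setT. Qed.

Lemma Pr0 : Pr set0 = 0.
Proof. by rewrite /Pr measure0. Qed.

Lemma Pr_le1 A : measurable A -> Pr A <= 1.
Proof. by move=> mA; rewrite -PrT; apply: Pr_le. Qed.

Lemma PrU A B : measurable A -> measurable B -> A `&` B = set0 ->
  Pr (A `|` B) = Pr A + Pr B.
Proof.
move=> mA mB AB.
rewrite /Pr (measureU P mA mB AB) fineD //; exact: fin_num_measure.
Qed.

Lemma Pr_split A B : measurable A -> measurable B ->
  Pr A = Pr (A `&` B) + Pr (A `&` ~` B).
Proof.
move=> mA mB; rewrite -PrU; last 3 first.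
- exact: measurableI.
- by apply: measurableI => //; exact: measurableC.
- by rewrite setIACA setICr setI0.
by rewrite -setIUr setUCr setIT.
Qed.

Lemma mXo n o : measurable [set w | X n w = o].
Proof. exact: mX. Qed.

Lemma mCb n b : measurable [set w | C n w = b].
Proof.
case: b; first exact: mC.
rewrite (_ : [set w | C n w = false] = ~` [set w | C n w]).
  exact: measurableC.
by apply/seteqP; split => w /=; case: (C n w).
Qed.

Definition hev n w0 := history_event X C n (fun m => X m w0) (fun m => C m w0).

Lemma hev_refl n w : hev n w w.
Proof. by []. Qed.

Lemma hev_sym n w0 w : hev n w0 w -> hev n w w0.
Proof. by move=> H m mn; have [-> H2] := H m mn; split=> // /H2. Qed.

Lemma hevS n w0 w : hev n.+1 w0 w -> hev n w0 w.
Proof.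
move=> H m mn; have [-> H2] := H m (leqW mn); split=> // lt.
by apply: H2; apply: ltnW.
Qed.

Lemma mH n w0 : measurable (hev n w0).
Proof.
elim: n => [|n IH].
  rewrite (_ : hev 0 w0 = [set w | X 0 w = X 0 w0]); first exact: mXo.
  apply/seteqP; split => w /=.
    by move=> H; have [] := H 0%N (leqnn 0).
  by move=> H m; rewrite leqn0 => /eqP ->; split.
rewrite (_ : hev n.+1 w0 = hev n w0 `&` [set w | X n.+1 w = X n.+1 w0]
   `&` [set w | C n w = C n w0]).
  by apply: measurableI; [apply: measurableI => //; exact: mXo | exact: mCb].
apply/seteqP; split => w /=.
  move=> H; split; [split; [exact: hevS | by have [] := H n.+1 (leqnn _)]|].
  by have [_ H'] := H n (leqnSn n); apply: H'.
move=> [[H1 H2] H3] m; rewrite leq_eqVlt => /orP [/eqP ->|]; first split => //.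
  by rewrite ltnn.
rewrite ltnS => mn; have [-> H4] := H1 m mn; split => // _.
by move: mn; rewrite leq_eqVlt => /orP [/eqP ->|/H4].
Qed.

Definition code n := ({ffun 'I_n.+1 -> option 'I_N} * {ffun 'I_n -> bool})%type.
Definition hist n w : code n := ([ffun k : 'I_n.+1 => X k w], [ffun k : 'I_n => C k w]).

Lemma histE n w0 : hist n @^-1` [set hist n w0] = hev n w0.
Proof.
apply/seteqP; split => w /=.
  move=> [/ffunP H1 /ffunP H2] m mn; split.
    by have := H1 (Ordinal (mn : (m < n.+1)%N)); rewrite !ffunE.
  by move=> lt; have := H2 (Ordinal lt); rewrite !ffunE.
move=> H; congr pair; apply/ffunP => k; rewrite !ffunE.
  by have [] := H k (ltn_ord k).
by have [_ ->] := H k (ltnW (ltn_ord k)).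
Qed.

Lemma mhist n h : measurable (hist n @^-1` [set h]).
Proof.
have [[w0 <-]|nh] := pselect (exists w0, hist n w0 = h).
  by rewrite histE; exact: mH.
rewrite (_ : _ @^-1` _ = set0) //; apply/seteqP; split => w //= hw.
by apply: nh; exists w.
Qed.

Lemma mhist_seq n (s : seq (code n)) :
  measurable (hist n @^-1` [set h | h \in s]).
Proof.
elim: s => [|h s IH].
  by rewrite (_ : _ @^-1` _ = set0) //; apply/seteqP; split => w.
rewrite (_ : _ @^-1` _ = hist n @^-1` [set h] `|` hist n @^-1` [set h | h \in s]).
  exact: measurableU (mhist _ _) IH.
apply/seteqP; split => w /=.
  by rewrite in_cons => /orP [/eqP ->|H]; [left|right].
by move=> [->|H]; rewrite in_cons ?eqxx ?H ?orbT.
Qed.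

Lemma part_seq n A (s : seq (code n)) : measurable A -> uniq s ->
  Pr (A `&` hist n @^-1` [set h | h \in s]) =
  \sum_(h <- s) Pr (A `&` hist n @^-1` [set h]).
Proof.
move=> mA; elim: s => [|h s IH] /=.
  by move=> _; rewrite big_nil (_ : _ `&` _ = set0) ?Pr0 //; apply/seteqP; split => w [].
move=> /andP [hs us]; rewrite big_cons -IH //.
rewrite (_ : A `&` hist n @^-1` [set h0 | h0 \in h :: s] = (A `&` hist n @^-1` [set h]) `|` (A `&` hist n @^-1` [set h | h \in s])).
  apply: PrU.
  - exact: measurableI (mhist _ _).
  - exact: measurableI (mhist_seq _ _).
  apply/seteqP; split => w //= [[_ ->] [_]]; by rewrite (negbTE hs).
rewrite -setIUr; congr (_ `&` _).
apply/seteqP; split => w /=.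
  by rewrite in_cons => /orP [/eqP ->|H]; [left|right].
by move=> [->|H]; rewrite in_cons ?eqxx ?H ?orbT.
Qed.

Lemma part n A : measurable A ->
  Pr A = \sum_(h : code n) Pr (A `&` hist n @^-1` [set h]).
Proof.
move=> mA; rewrite -part_seq //; last exact: index_enum_uniq.
congr Pr; apply/seteqP; split => w /=; last by case.
by move=> Aw; split => //; rewrite mem_index_enum.
Qed.


Definition Fev n (E : set Omega) :=
  measurable E /\ forall w w0, hev n w0 w -> E w0 -> E w.

Definition G n := [set w | X n w = None \/ C n w].

Lemma mG n : measurable (G n).
Proof. exact: measurableU (mX _ _) (mC _). Qed.

Lemma FevI n A B : Fev n A -> Fev n B -> Fev n (A `&` B).
Proof.
move=> [mA hA] [mB hB]; split; first exact: measurableI.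
by move=> w w0 H [/(hA _ _ H) ? /(hB _ _ H) ?].
Qed.

Lemma FevC n A : Fev n A -> Fev n (~` A).
Proof.
move=> [mA hA]; split; first exact: measurableC.
by move=> w w0 H nA Aw; apply: nA; apply: (hA w0 w) => //; exact: hev_sym.
Qed.

Lemma FevS n A : Fev n A -> Fev n.+1 A.
Proof. by move=> [mA hA]; split => // w w0 /hevS; exact: hA. Qed.

Lemma FevT n : Fev n setT.
Proof. by split. Qed.

Lemma FevX n o : Fev n [set w | X n w = o].
Proof.
split; first exact: mXo.
by move=> w w0 H /= <-; have [] := H n (leqnn n).
Qed.

Lemma FevG n : Fev n.+1 (G n).
Proof.
split; first exact: mG.
move=> w w0 H; have [H1 _] := H n (leqnSn n); have [_ H2] := H n (leqnSn n).
by rewrite /G /= H1 (H2 (ltnSn n)).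
Qed.

Lemma hyp' n w0 : p * Pr (hev n w0) <= Pr (hev n w0 `&` G n).
Proof.
case E0: (X n w0) => [i|].
  have := @hyp n (fun m => X m w0) (fun m => C m w0) i E0.
  rewrite -/(hev n w0) PrE; last exact: mH.
  rewrite PrE; last by apply: measurableI; [exact: mH | exact: mC].
  rewrite -EFinM lee_fin => /le_trans; apply.
  apply: Pr_le; [apply: measurableI; [exact: mH|exact: mC]|
    apply: measurableI; [exact: mH|exact: mG]|].
  by move=> w [? ?]; split => //; right.
rewrite (_ : _ `&` _ = hev n w0).
  by apply: ler_piMl => //; exact: Pr_ge0.
apply/seteqP; split => w; first by case.
move=> H; split => //; left; have [-> _] := H n (leqnn n); exact: E0.
Qed.

Lemma step n E : Fev n E -> p * Pr E <= Pr (E `&` G n).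
Proof.
move=> [mE hE].
rewrite (part n E mE) (part n (E `&` G n) (measurableI _ _ mE (mG n))) mulr_sumr.
apply: ler_sum => h _.
have [[w0 <-]|nh] := pselect (exists w0, hist n w0 = h); last first.
  rewrite (_ : hist n @^-1` [set h] = set0) ?setI0 ?Pr0 ?mulr0 //.
  by apply/seteqP; split => w //= hw; apply: nh; exists w.
rewrite histE.
have [Ew0|nE] := pselect (E w0).
  rewrite (_ : E `&` hev n w0 = hev n w0); last first.
    by apply/seteqP; split => w; [case|move=> H; split => //; exact: (hE w w0)].
  rewrite (_ : E `&` G n `&` hev n w0 = hev n w0 `&` G n); first exact: hyp'.
  apply/seteqP; split => w; first by move=> [[]].
  by move=> [H Gw]; split => //; split => //; exact: (hE w w0).
rewrite (_ : E `&` hev n w0 = set0); last first.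
  apply/seteqP; split => w // [Ew H]; apply: nE; apply: (hE w0 w) => //.
  exact: hev_sym.
rewrite (_ : E `&` G n `&` hev n w0 = set0) ?Pr0 ?mulr0 //.
apply/seteqP; split => w // [[Ew _] H]; apply: nE; apply: (hE w0 w) => //.
exact: hev_sym.
Qed.

Definition rank (o : option 'I_N) : nat := if o is Some i then (N - i)%N else 0%N.

Lemma rank_le o : (rank o <= N)%N.
Proof. by case: o => [i|] //=; exact: leq_subr. Qed.

Lemma rank0 o : (rank o <= 0)%N -> o = None.
Proof. by case: o => [i|] //=; rewrite leqn0 subn_eq0 leqNgt ltn_ord. Qed.

Lemma rank_next n w r : (rank (X n w) <= r.+1)%N -> G n w ->
  (rank (X n.+1 w) <= r)%N.
Proof.
case E0: (X n w) => [i|] /= hr [XN|Cw].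
- by rewrite E0 in XN.
- rewrite (ctrl n w i E0 Cw) /next_op; case: insubP => [j Hj Hv|] //=.
  by rewrite Hv subnS -subn1 leq_subLR add1n.
- by rewrite (absorb n w E0).
- by rewrite (absorb n w E0).
Qed.

Lemma reach r : forall n E, Fev n E -> (forall w, E w -> (rank (X n w) <= r)%N) ->
  p ^+ r * Pr E <= Pr (E `&` [set w | X (n + r)%N w = None]).
Proof.
elim: r => [|r IH] n E FE rE.
  rewrite expr0 mul1r addn0 (_ : _ `&` _ = E) //.
  by apply/seteqP; split => w; [case|move=> Ew; split => //; exact: rank0 (rE w Ew)].
have FE1 : Fev n.+1 (E `&` G n) by apply: FevI; [exact: FevS|exact: FevG].
have := IH n.+1 _ FE1.
have -> : (n.+1 + r = n + r.+1)%N by rewrite addSnnS.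
move=> /(_ _) H.
have {H} H : p ^+ r * Pr (E `&` G n) <= Pr (E `&` G n `&` [set w | X (n + r.+1)%N w = None]).
  by apply: H => w [Ew Gw]; exact: rank_next (rE w Ew) Gw.
apply: le_trans (le_trans _ H) _.
  rewrite exprSr -mulrA; apply: ler_wpM2l; first exact: (exprn_ge0 r (ltW p0)).
  by apply: step; case: FE.
apply: Pr_le.
- by apply: measurableI; [apply: measurableI; [case: FE|exact: mG]|exact: mXo].
- by apply: measurableI; [case: FE|exact: mXo].
by move=> w [[]].
Qed.


Lemma absorb_le s t w : (s <= t)%N -> X s w = None -> X t w = None.
Proof.
move=> /subnK <- Xs; elim: (t - s)%N => [|k IH] //.
by rewrite addSn; exact: absorb.
Qed.

Lemma a_bound j : Pr (~` [set w | X (j * N)%N w = None]) <= (1 - p ^+ N) ^+ j.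
Proof.
elim: j => [|j IH].
  by rewrite expr0; apply: Pr_le1; apply: measurableC; exact: mXo.
set E := ~` [set w | X (j * N)%N w = None].
have FE : Fev (j * N) E by apply: FevC; exact: FevX.
have H := @reach N (j * N)%N E FE (fun w _ => rank_le _).
set B := [set w | X (j * N + N)%N w = None] in H.
have -> : ~` [set w | X (j.+1 * N)%N w = None] = E `&` ~` B.
  rewrite mulSnr; apply/seteqP; split => w /=.
    move=> nX; split => // XjN; apply: nX.
    exact: absorb_le (leq_addr N (j * N)) XjN.
  by move=> [_ nB].
have mE : measurable E by case: FE.
have sp := Pr_split _ _ mE (mXo (j * N + N) None).
have h1 : Pr (E `&` ~` B) <= (1 - p ^+ N) * Pr E.
  rewrite -/B in sp; lra.
apply: le_trans h1 _; rewrite exprS; apply: ler_wpM2l => //.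
by rewrite subr_ge0; apply: exprn_ile1 => //; exact: ltW.
Qed.

Definition cnt n dd w := count (fun m => ~~ C m w) (iota n dd).
Definition Good n k := [set w | exists dd, X (n + dd)%N w = None /\ (cnt n dd w <= k)%N].

Lemma cntS n dd w : cnt n dd.+1 w = (~~ C n w + cnt n.+1 dd w)%N.
Proof. by []. Qed.

Lemma mcnt dd : forall n k, measurable [set w | (cnt n dd w <= k)%N].
Proof.
elim: dd => [|dd IH] n k.
  by rewrite (_ : [set w | (cnt n 0 w <= k)%N] = setT) //; apply/seteqP; split => w.
case: k => [|k].
  rewrite (_ : [set w | (cnt n dd.+1 w <= 0)%N] = [set w | C n w] `&` [set w | (cnt n.+1 dd w <= 0)%N]).
    exact: measurableI (mC _) (IH _ _).
  apply/seteqP; split => w /=; rewrite cntS; case: (C n w) => //=.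
    by case.
  by case.
rewrite (_ : [set w | (cnt n dd.+1 w <= k.+1)%N] = ([set w | C n w] `&` [set w | (cnt n.+1 dd w <= k.+1)%N]) `|`
   (~` [set w | C n w] `&` [set w | (cnt n.+1 dd w <= k)%N])).
  apply: measurableU; apply: measurableI => //; exact: measurableC.
apply/seteqP; split => w /=; rewrite cntS; case: (C n w) => /=.
- by move=> H; left.
- by rewrite add1n ltnS => H; right.
- by case => [[_ H]|[]].
- by rewrite add1n ltnS; case => [[]|[_ H]].
Qed.

Lemma mGood n k : measurable (Good n k).
Proof.
rewrite (_ : Good n k = \bigcup_(dd in setT)
   ([set w | X (n + dd)%N w = None] `&` [set w | (cnt n dd w <= k)%N])).
  by apply: bigcup_measurable => dd _; exact: measurableI (mXo _ _) (mcnt _ _ _).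
apply/seteqP; split => w /=.
  by move=> [dd H]; exists dd.
by move=> [dd _ H]; exists dd.
Qed.

Lemma Good_none n k w : X n w = None -> Good n k w.
Proof. by move=> XN; exists 0%N; rewrite addn0. Qed.

Lemma Good_step n k w : G n w -> Good n.+1 k w -> Good n k w.
Proof.
move=> [XN|Cw] [dd [Xd cd]]; first exact: Good_none.
by exists dd.+1; rewrite -addSnnS cntS Cw.
Qed.

Lemma Good_unc n k w : Good n.+1 k w -> Good n k.+1 w.
Proof.
move=> [dd [Xd cd]]; exists dd.+1; rewrite -addSnnS cntS; split => //.
case: (C n w) => /=; rewrite ?add0n ?add1n ?ltnS //.
exact: leq_trans cd (leqnSn k).
Qed.

Lemma bad_r k (H2 : forall n E, Fev n E ->
    Pr (E `&` ~` G n `&` ~` Good n k) <= (1 - p ^+ N) ^+ k * Pr (E `&` ~` G n)) r :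
  forall n E, Fev n E -> (forall w, E w -> (rank (X n w) <= r)%N) ->
  Pr (E `&` ~` Good n k) <= (1 - p ^+ r) * (1 - p ^+ N) ^+ k * Pr E.
Proof.
elim: r => [|r IH] n E FE rE.
  rewrite (_ : E `&` ~` Good n k = set0) ?Pr0 ?expr0 ?subrr ?mul0r //.
  apply/seteqP; split => w // [Ew]; apply; apply: Good_none; exact: rank0 (rE w Ew).
have mE : measurable E by case: FE.
have mGd := mGood n k.
have mGd1 := mGood n.+1 k.
rewrite (Pr_split _ _ (measurableI _ _ mE (measurableC mGd)) (mG n)).
have FE1 : Fev n.+1 (E `&` G n) by apply: FevI; [exact: FevS|exact: FevG].
have h1 : Pr (E `&` ~` Good n k `&` G n) <=
    (1 - p ^+ r) * (1 - p ^+ N) ^+ k * Pr (E `&` G n).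
  apply: le_trans (IH n.+1 _ FE1 _); last first.
    by move=> w [Ew Gw]; exact: rank_next (rE w Ew) Gw.
  apply: Pr_le.
  - by apply: measurableI; [apply: measurableI => //; exact: measurableC|exact: mG].
  - by apply: measurableI; [apply: measurableI => //; exact: mG|exact: measurableC].
  move=> w [[Ew nG] Gw]; split => // G1; apply: nG; exact: Good_step.
have h2 : Pr (E `&` ~` Good n k `&` ~` G n) <= (1 - p ^+ N) ^+ k * Pr (E `&` ~` G n).
  by rewrite setIAC; exact: H2.
have sp := Pr_split _ _ mE (mG n).
have st := step _ _ FE.
have a0 : 0 <= p ^+ r by apply: exprn_ge0; exact: ltW.
have a1 : p ^+ r <= 1 by apply: exprn_ile1 => //; exact: ltW.
have B0 : 0 <= (1 - p ^+ N) ^+ k.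
  by apply: exprn_ge0; rewrite subr_ge0; apply: exprn_ile1 => //; exact: ltW.
have e1 := Pr_ge0 (E `&` G n).
have e2 := Pr_ge0 (E `&` ~` G n).
have hint : 0 <= (1 - p ^+ N) ^+ k * p ^+ r * (Pr (E `&` G n) - p * Pr E).
  by apply: mulr_ge0; [exact: mulr_ge0|rewrite subr_ge0].
rewrite exprS.
move: h1 h2 sp st hint a0 a1 B0 e1 e2.
set B := (1 - p ^+ N) ^+ k; set a := p ^+ r; set x1 := Pr (E `&` G n);
  set x2 := Pr (E `&` ~` G n); set e := Pr E.
set y1 := Pr (_ `&` G n); set y2 := Pr (_ `&` ~` G n).
move=> h1 h2 sp st hint a0 a1 B0 e1 e2.
nra.
Qed.

Lemma bad k : forall r n E, Fev n E -> (forall w, E w -> (rank (X n w) <= r)%N) ->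
  Pr (E `&` ~` Good n k) <= (1 - p ^+ r) * (1 - p ^+ N) ^+ k * Pr E.
Proof.
elim: k => [|k IHk] r.
  apply: bad_r => n E [mE _]; rewrite expr0 mul1r; apply: Pr_le.
  - apply: measurableI; [apply: measurableI => //; exact: measurableC (mG n)|].
    exact: measurableC (mGood _ _).
  - by apply: measurableI => //; exact: measurableC (mG n).
  by move=> w [[]].
apply: bad_r => n E FE.
have FE2 : Fev n.+1 (E `&` ~` G n).
  by apply: FevI; [exact: FevS|apply: FevC; exact: FevG].
have := IHk N n.+1 _ FE2 (fun w _ => rank_le _).
rewrite -exprS => h; apply: le_trans h.
have mE : measurable E by case: FE.
apply: Pr_le.
- apply: measurableI; [apply: measurableI => //; exact: measurableC (mG n)|].
  exact: measurableC (mGood _ _).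
- apply: measurableI; [apply: measurableI => //; exact: measurableC (mG n)|].
  exact: measurableC (mGood _ _).
move=> w [EG nG]; split => // G1; apply: nG; exact: Good_unc.
Qed.

Lemma geo0 (q x : R) : 0 < q -> q <= 1 -> (forall j, x <= (1 - q) ^+ j) -> x <= 0.
Proof.
move=> q0 q1 H; rewrite leNgt; apply/negP => x0.
have bern j : (1 + j%:R * q) * (1 - q) ^+ j <= 1.
  elim: j => [|j IH]; first by rewrite mul0r addr0 expr0 mulr1.
  have y0 : 0 <= (1 - q) ^+ j by apply: exprn_ge0; lra.
  have j0 : 0 <= j%:R :> R by [].
  rewrite exprS -natr1.
  move: IH y0 j0; set y := (1 - q) ^+ j; set J := (j%:R : R) => IH y0 j0.
  have : 0 <= (J * q * q + q * q) * y by apply: mulr_ge0 => //; nra.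
  nra.
have [j hj] : exists j : nat, (q * x)^-1 < j%:R.
  by eexists; apply: archi_boundP; apply: ltW; rewrite invr_gt0; exact: mulr_gt0.
have hj' : 1 < j%:R * (q * x).
  have qx0 : 0 < q * x := mulr_gt0 q0 x0.
  have e : (q * x)^-1 * (q * x) = 1 by rewrite mulVf // lt0r_neq0.
  move: hj e qx0; set iv := (q * x)^-1; set qx := q * x; nra.
have := bern j; have := H j; have j0 : 0 <= j%:R :> R by [].
move: hj' j0; set J := (j%:R : R); set y := (1 - q) ^+ j => hj' j0 Hx Hb.
have : x * (1 + J * q) <= y * (1 + J * q) by apply: ler_wpM2r => //; nra.
nra.
Qed.


Hypothesis N1 : (1 <= N)%N.

Lemma claim1 : P [set w | exists n, X n w = None] = 1%E.
Proof.
set U := [set w | exists n, X n w = None].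
have mU : measurable U.
  rewrite (_ : U = \bigcup_(n in setT) [set w | X n w = None]).
    by apply: bigcup_measurable => n _; exact: mXo.
  by apply/seteqP; split => w /=; [move=> [n H]; exists n | move=> [n _ H]; exists n].
have nU0 : Pr (~` U) <= 0.
  apply: (@geo0 (p ^+ N)); [exact: exprn_gt0 | by apply: exprn_ile1 => //; exact: ltW|].
  move=> j; apply: le_trans (a_bound j); apply: Pr_le;
    [exact: measurableC|exact: measurableC (mXo _ _)|].
  by move=> w nU XN; apply: nU; exists (j * N)%N.
have sp := Pr_split _ _ measurableT mU.
rewrite !setTI PrT in sp.
rewrite PrE //; congr EFin; have := Pr_ge0 (~` U); lra.
Qed.

Lemma claim2 k : ((1 - (1 - p ^+ N) ^+ k.+1)%:E <=
   P [set w | exists n, X n w = None /\ (unc_count C n w <= k)%N])%E.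
Proof.
rewrite (_ : [set w | exists n, X n w = None /\ (unc_count C n w <= k)%N] = Good 0 k).
  rewrite PrE; last exact: mGood.
  rewrite lee_fin.
  have := @bad k N 0 setT (FevT 0) (fun w _ => rank_le _).
  rewrite setTI PrT mulr1 -exprS => h.
  have sp := Pr_split _ _ measurableT (mGood 0 k).
  rewrite !setTI PrT in sp; lra.
apply/seteqP; split => w /=.
  by move=> [n [H1 H2]]; exists n; rewrite add0n.
by move=> [n]; rewrite add0n => -[H1 H2]; exists n.
Qed.

Definition ind t w : \bar R := ((\1_(~` [set w | X t w = None]) w : R))%:E.

Lemma ind_ge0 t w : (0 <= ind t w)%E.
Proof. by rewrite /ind lee_fin indicE ler0n. Qed.

Lemma T_eq w : hitting_time R X w = (\sum_(t <oo) ind t w)%E.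
Proof.
have ind1 t : X t w <> None -> ind t w = 1%E.
  by move=> H; rewrite /ind indicE mem_set.
have ind0 t : X t w = None -> ind t w = 0%E.
  by move=> H; rewrite /ind indicE memNset //= => /(_ H).
have [ex|nex] := pselect (exists n, X n w = None).
  have ex' : exists n, X n w == None by case: ex => n H; exists n; apply/eqP.
  case: (ex_minnP ex') => h /eqP Xh hmin.
  have lt t : (t < h)%N -> X t w <> None.
    move=> th Xt; have := hmin t (introT eqP Xt); by rewrite leqNgt th.
  have -> : hitting_time R X w = (h%:R)%:E.
    apply/eqP; rewrite eq_le; apply/andP; split.
      by apply: ge_ereal_inf; exists (h%:R)%:E => //; exists h.
    apply: le_ereal_inf_tmp => y [n /= Xn <-]; rewrite lee_fin ler_nat.
    by apply: hmin; apply/eqP.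
  rewrite (@nneseries_split _ (fun t => ind t w) 0 h); last by move=> k _; exact: ind_ge0.
  rewrite eseries0; last first.
    by move=> i hi _; apply: ind0; apply: absorb_le Xh; rewrite add0n in hi.
  rewrite adde0 add0n (eq_big_nat _ _ (F2 := fun=> 1%E)); last first.
    by move=> i /andP [_ ih]; apply: ind1; exact: lt.
  by rewrite sumEFin sumr_const_nat subn0.
rewrite /hitting_time (_ : [set _ | n in _] = set0) ?ereal_inf0; last first.
  by apply/seteqP; split => y // [n Xn _]; apply: nex; exists n.
apply/esym/cvg_lim => //.
rewrite (_ : (fun n => _) = fun n => (n%:R)%:E); last first.
  apply/funext => n; rewrite (eq_big_nat _ _ (F2 := fun=> 1%E)); last first.
    by move=> i _; apply: ind1 => H; apply: nex; exists i.
  by rewrite sumEFin sumr_const_nat subn0.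
by apply/cvgenyP.
Qed.

Lemma geom j : p ^+ N * \sum_(0 <= i < j) (1 - p ^+ N) ^+ i = 1 - (1 - p ^+ N) ^+ j.
Proof.
elim: j => [|j IH]; first by rewrite big_geq // mulr0 expr0 subrr.
rewrite big_nat_recr //= mulrDr IH exprS; ring.
Qed.

Lemma block_sum j : \sum_(0 <= t < j * N) Pr (~` [set w | X t w = None]) <=
  N%:R * \sum_(0 <= i < j) (1 - p ^+ N) ^+ i.
Proof.
elim: j => [|j IH]; first by rewrite mul0n !big_geq // mulr0.
rewrite (@big_cat_nat _ _ _ (j * N)) //=; last by rewrite mulSnr leq_addr.
rewrite big_nat_recr //= mulrDr; apply: lerD IH _.
apply: le_trans (ler_sum_nat (G := fun=> (1 - p ^+ N) ^+ j) _) _.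
  move=> t /andP [jt _]; apply: le_trans (a_bound j); apply: Pr_le;
    [exact: measurableC (mXo _ _)|exact: measurableC (mXo _ _)|].
  by move=> w nX XjN; apply: nX; exact: absorb_le jt XjN.
by rewrite sumr_const_nat mulSnr addKn mulr_natl.
Qed.

Lemma sum_bound M : \sum_(0 <= t < M) Pr (~` [set w | X t w = None]) <= N%:R / p ^+ N.
Proof.
have q0 : 0 < p ^+ N by exact: exprn_gt0.
apply: (@le_trans _ _ (\sum_(0 <= t < M * N) Pr (~` [set w | X t w = None]))).
  rewrite (@big_cat_nat _ _ _ M 0 (M * N)) //=; last by rewrite leq_pmulr.
  by rewrite lerDl; apply: sumr_ge0 => i _; exact: Pr_ge0.
apply: le_trans (block_sum M) _.
rewrite ler_wpM2l //.
have y0 : 0 <= (1 - p ^+ N) ^+ M.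
  by apply: exprn_ge0; rewrite subr_ge0; apply: exprn_ile1 => //; exact: ltW.
have : p ^+ N * \sum_(0 <= i < M) (1 - p ^+ N) ^+ i <= p ^+ N * (p ^+ N)^-1.
  by rewrite geom mulfV ?gt_eqF // lerBlDr lerDl.
by rewrite ler_pM2l.
Qed.

Lemma claim3 : (\int[P]_w hitting_time R X w <= (N%:R / p ^+ N)%:E)%E.
Proof.
under eq_integral => w _ do rewrite T_eq.
rewrite integral_nneseries //; last 2 first.
- move=> t; apply/measurable_realfun.measurable_EFinP.
  exact: measurable_realfun.measurable_indic (measurableC (mXo _ _)).
- by move=> t w _; exact: ind_ge0.
rewrite /ind (eq_eseriesr (g := fun t => (Pr (~` [set w | X t w = None]))%:E)); last first.
  move=> t _; rewrite integral_indic ?setIT; last exact: measurableC (mXo _ _).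
    rewrite /Pr fineK //; apply: fin_num_measure; exact: measurableC (mXo _ _).
  exact: measurableT.
apply: lime_le.
  by apply: is_cvg_nneseries => n _ _; rewrite lee_fin; exact: Pr_ge0.
apply: nearW => M; rewrite sumEFin lee_fin; exact: sum_bound.
Qed.

End Proof.

Theorem theorem1 (d : measure_display) (Omega : measurableType d)
  (R : realType) (P : probability Omega R) (N : nat) (p : R)
  (X : nat -> Omega -> option 'I_N) (C : nat -> Omega -> bool) :
  (1 <= N)%N ->
  0 < p -> p <= 1 ->
  (* measurability of the discrete execution process *)
  (forall n o, measurable (X n @^-1` [set o])) ->
  (forall n, measurable [set w | C n w]) ->
  (* the goal is absorbing *)
  (forall n w, X n w = None -> X n.+1 w = None) ->
  (* a controlled transition of o_i advances to o_{i+1} (or to L_G) *)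
  (forall n w i, X n w = Some i -> C n w -> X n.+1 w = next_op i) ->
  (* (an uncontrolled transition may jump anywhere: no constraint) *)
  (* each run of an operator ends in a controlled transition with
     probability >= p, conditionally on any execution history *)
  (forall n x c i, x n = Some i ->
     (p%:E * P (history_event X C n x c)
        <= P (history_event X C n x c `&` [set w | C n w]))%E) ->
  (* conclusions *)
  P [set w | exists n, X n w = None] = 1%E /\
  (forall k : nat,
     ((1 - (1 - p ^+ N) ^+ k.+1)%:E
        <= P [set w | exists n, X n w = None /\ (unc_count C n w <= k)%N])%E) /\
  (\int[P]_w hitting_time R X w <= (N%:R / p ^+ N)%:E)%E.
Proof.
move=> N1 p0 p1 mX mC absorb ctrl hyp.
split; first exact: (@claim1 _ _ _ _ _ _ _ _ p0 p1 mX mC absorb ctrl hyp).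
split; first by move=> k; exact: (@claim2 _ _ _ _ _ _ _ _ p0 p1 mX mC absorb ctrl hyp).
exact: (@claim3 _ _ _ _ _ _ _ _ p0 p1 mX mC absorb ctrl hyp N1).
Qed.
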